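(* Suppose $h$ is odd. Then for every $p\in\mathcal P$, if $\mu(p)=\mu_0$ and $D_{\mu(p)}(p)=D_{\mu(p^r)}(p^r)$, then $\mu(p^r)>\mu_0$.
   Context: Let $n,h\ge2$, $N=\{1,\dots,n\}$, $H=\{1,\dots,h\}$, $\mathcal P$ the set of $h$-tuples of linear orders on $N$, $p^r$ the profile obtained by reversing each order; $x>_{p_i}y$ means $x\neq y$ and $p_i$ ranks $x$ above $y$; for an integer $\mu\in(h/2,h]$, $D_\mu(p)=\{x\in N: \forall y,\ |\{i: y>_{p_i}x\}|<\mu\}$; $\mu(p)=\min\{\mu\in\mathbb N\cap(h/2,h]: D_\mu(p)\ne\varnothing\}$; $\mu_0=\lceil(h+1)/2\rceil$. *)

(* Defs.v *)
From mathcomp Require Import all_boot.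
Set Implicit Arguments. Unset Strict Implicit. Unset Printing Implicit Defensive.

(* Alternatives N = {1..n} are 'I_n, voters H = {1..h} are 'I_h. *)

(* A (weak, reflexive) linear order on 'I_n: [r x y] means "x is ranked at
   or above y". *)
Definition linear_order (n : nat) (r : rel 'I_n) : Prop :=
  [/\ reflexive r, antisymmetric r, transitive r & total r].

(* A profile: an h-tuple of relations on 'I_n (each required to be a
   linear order in the statement). *)
Definition profile (n h : nat) := 'I_h -> rel 'I_n.

Definition above (n : nat) (r : rel 'I_n) (x y : 'I_n) : bool := (x != y) && r x y.

Definition rev_profile (n h : nat) (p : profile n h) : profile n h :=
  fun i => [rel x y | p i y x].

Definition Dset (n h : nat) (p : profile n h) (mu : nat) : {set 'I_n} :=
  [set x | [forall y, #|[set i : 'I_h | above (p i) y x]| < mu]].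

Definition admissible (h mu : nat) : bool := (h < mu.*2) && (mu <= h).

(* mu(p) = min { mu in N ∩ (h/2, h] | D_mu(p) <> ∅ }, computed as the first
   m in 0, 1, ..., h that is admissible with D_m(p) nonempty (the set is
   nonempty for profiles of linear orders since D_h(p) <> ∅). *)
Definition mu_of (n h : nat) (p : profile n h) : nat :=
  find (fun m => admissible h m && (Dset p m != set0)) (iota 0 h.+1).

(* mu_0 = ceil((h+1)/2) *)
Definition mu0 (h : nat) : nat := (h.+2)./2.

(* Main.v *)
Require Import Defs.
From mathcomp Require Import all_boot.
From mathcomp Require Import zify.

Lemma mu_of_nonempty (n h : nat) (p : profile n h) :
  mu_of p <= h -> Dset p (mu_of p) != set0.
Proof.
rewrite /mu_of => Hle.
set a := (fun m => _).
have Hhas : has a (iota 0 h.+1) by rewrite has_find size_iota ltnS.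
have := nth_find 0 Hhas.
by rewrite nth_iota ?add0n ?size_iota ?ltnS // => /andP[].
Qed.

Theorem lemma7 (n h : nat) (hn : 2 <= n) (hh : 2 <= h) (hodd : odd h)
  (p : profile n h) (Hp : forall i, linear_order (p i)) :
  mu_of p = mu0 h ->
  Dset p (mu_of p) = Dset (rev_profile p) (mu_of (rev_profile p)) ->
  mu0 h < mu_of (rev_profile p).
Proof.
move=> Hmu HD.
rewrite ltnNge; apply/negP => Hle.
have Hh2 : h = h./2.*2 + 1 by rewrite -{1}(odd_double_half h) hodd; lia.
have Hm0 : mu0 h = h./2 + 1.
  rewrite /mu0 {1}Hh2 addn1.
  have -> : (h./2.*2).+3 = (h./2).+1.*2 + 1 by rewrite doubleS addn1.
  by rewrite addn1 -uphalfE uphalf_double addn1.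
have Hmuh : mu_of p <= h by rewrite Hmu; lia.
have /set0Pn [x Hx] := mu_of_nonempty _ _ _ Hmuh.
have Hx2 := Hx; rewrite HD in Hx2.
rewrite Hmu in Hx.
have [y Hyx] : exists y : 'I_n, y != x.
  case: (eqVneq x (Ordinal (ltnW hn))) => [Ex|Nx].
  - exists (Ordinal hn); rewrite Ex; apply/eqP => /(congr1 val) /=; lia.
  - by exists (Ordinal (ltnW hn)); rewrite eq_sym.
move: Hx Hx2; rewrite !inE => /forallP /(_ y) H1 /forallP /(_ y) H2.
set S := [set i | above (p i) y x] in H1.
have ES : [set i | above (rev_profile p i) y x] = ~: S.
  apply/setP => i; rewrite !inE /above /rev_profile /= Hyx /=.
  have [_ Ha _ Ht] := Hp i.
  case Hxy: (p i x y); case Hyx': (p i y x) => //.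
  - by move: Hyx; rewrite (Ha x y) ?Hxy ?Hyx' // eqxx.
  - by have := Ht x y; rewrite Hxy Hyx'.
rewrite ES in H2.
have Hc := cardsC S; rewrite card_ord in Hc.
lia.
Qed.
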